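(* Let $(M,\varphi,\xi,\eta,g)$ be a $3$-dimensional $f$-Kenmotsu manifold and let $\gamma(s):I\to M$ be a non-geodesic, arc-length parametrized Frenet curve with Frenet frame $\{T,N,B\}$, curvature $k_1=k_1(s)$ and torsion $k_2=k_2(s)$. Put $A:=\frac{r}{2}+2(f^2+f')$ and $\Lambda:=\frac{r}{2}+3(f^2+f')$. Then $\gamma$ is a triharmonic curve if and only if \begin{align*} &k_1k_1'''+2k_1'k_1''-2k_1^3k_1'-k_2^2k_1k_1'-k_1^2k_2k_2'=0,\\ &k_1^{(4)}-10k_1^2k_1''-6k_2^2k_1''-4k_1k_2k_2''-15k_1(k_1')^2-12k_2k_2'k_1'-3k_1(k_2')^2+k_1^5+k_1k_2^4+2k_1^3k_2^2\\ &\quad+(k_1''-2k_1^3-k_1k_2^2)\big(A-\Lambda(\eta(T)^2+\eta(N)^2)\big)-\big(k_1^2k_2\eta(T)+(2k_2k_1'+k_1k_2')\eta(N)\big)\Lambda\,\eta(B)=0,\\ &4k_2k_1'''+6k_1''k_2'+4k_1'k_2''-9k_1^2k_2k_1'-4k_2^3k_1'-6k_1k_2^2k_2'-k_2'k_1^3+k_1k_2'''\\ &\quad+(2k_1'k_2+k_1k_2')\big(A-\Lambda(\eta(T)^2+\eta(B)^2)\big)+\big(k_1^2k_2\eta(T)-(k_1''-2k_1^3-k_1k_2^2)\eta(B)\big)\Lambda\,\eta(N)=0. \end{align*}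
   Context: An almost contact metric manifold $(M^{2n+1},\varphi,\xi,\eta,g)$ has a $(1,1)$-tensor $\varphi$, vector field $\xi$, $1$-form $\eta$ and Riemannian metric $g$ with $\varphi^2=-I+\eta\otimes\xi$, $\eta(\xi)=1$, $\varphi\xi=0$, $\eta\circ\varphi=0$, $\eta(X)=g(X,\xi)$, $g(\varphi X,\varphi Y)=g(X,Y)-\eta(X)\eta(Y)$. It is an $f$-Kenmotsu manifold if the Levi-Civita connection satisfies $(\nabla_X\varphi)Y=f(g(\varphi X,Y)\xi-\eta(Y)\varphi X)$ and $\nabla_X\xi=f(X-\eta(X)\xi)$ for a smooth function $f$ with $df\wedge\eta=0$. In dimension 3 its curvature tensor is $R(X,Y)Z=(\frac r2+2(f^2+f'))(g(Y,Z)X-g(X,Z)Y)-(\frac r2+3(f^2+f'))(g(Y,Z)\eta(X)\xi-g(X,Z)\eta(Y)\xi-\eta(X)\eta(Z)Y+\eta(Y)\eta(Z)X)$, where $r$ is the scalar curvature and $f'$ denotes the derivative of $f$; along the curve $f,f',r$ are regarded as functions of the arc-length $s$. A Frenet curve satisfies $\nabla_TT=k_1N$, $\nabla_TN=-k_1T+k_2B$, $\nabla_TB=-k_2N$, $T=\gamma'$. An arc-length parametrized curve is triharmonic if $\tau_3(\gamma):=\nabla_T^5T+R(\nabla_T^3T,T)T-R(\nabla_T^2T,\nabla_TT)T=0$. Primes on $k_1,k_2$ denote derivatives in $s$. *)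

(* Defs.v *)
From Stdlib Require Import Reals.
From Coquelicot Require Import Coquelicot.
Open Scope R_scope.

(* Tangent vectors along the curve, expressed in a parallel orthonormal
   frame along gamma.  In such a frame the Levi-Civita
   covariant derivative nabla_T along gamma is the componentwise derivative
   in s and g is the Euclidean dot product. *)
Record vec := mkV { vx : R ; vy : R ; vz : R }.

Definition vadd (u v : vec) : vec := mkV (vx u + vx v) (vy u + vy v) (vz u + vz v).
Definition vscal (a : R) (u : vec) : vec := mkV (a * vx u) (a * vy u) (a * vz u).
Definition vsub (u v : vec) : vec := vadd u (vscal (-1) v).
Definition vzero : vec := mkV 0 0 0.
Definition dot (u v : vec) : R := vx u * vx v + vy u * vy v + vz u * vz v.

Definition Dn (n : nat) (F : R -> vec) (s : R) : vec :=
  mkV (Derive_n (fun t => vx (F t)) n s)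
      (Derive_n (fun t => vy (F t)) n s)
      (Derive_n (fun t => vz (F t)) n s).

Definition vis_derive (F : R -> vec) (s : R) (G : vec) : Prop :=
  is_derive (fun t => vx (F t)) s (vx G) /\
  is_derive (fun t => vy (F t)) s (vy G) /\
  is_derive (fun t => vz (F t)) s (vz G).

Definition Acoef (r f fp : R) : R := r / 2 + 2 * (f ^ 2 + fp).
Definition Lcoef (r f fp : R) : R := r / 2 + 3 * (f ^ 2 + fp).

(* Curvature tensor of a 3-dimensional f-Kenmotsu manifold at a point
   where xi takes value xi0, eta(X) = g(X, xi0):
   R(X,Y)Z = A (g(Y,Z)X - g(X,Z)Y)
           - Lambda (g(Y,Z)eta(X)xi - g(X,Z)eta(Y)xi - eta(X)eta(Z)Y + eta(Y)eta(Z)X) *)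
Definition Rcurv (A L : R) (xi0 : vec) (X Y Z : vec) : vec :=
  let eta := fun V => dot V xi0 in
  vsub (vadd (vscal (A * dot Y Z) X) (vscal (- (A * dot X Z)) Y))
       (vscal L
          (vadd (vadd (vscal (dot Y Z * eta X) xi0) (vscal (- (dot X Z * eta Y)) xi0))
                (vadd (vscal (- (eta X * eta Z)) Y) (vscal (eta Y * eta Z) X)))).

Definition tau3 (A L : R) (xi0 : vec) (T : R -> vec) (s : R) : vec :=
  vadd (Dn 5 T s)
       (vsub (Rcurv A L xi0 (Dn 3 T s) (T s) (T s))
             (Rcurv A L xi0 (Dn 2 T s) (Dn 1 T s) (T s))).

Definition inI (a b : Rbar) (s : R) : Prop := Rbar_lt a s /\ Rbar_lt s b.

(* Main.v *)
Require Import Defs.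
From Stdlib Require Import Reals.
From Coquelicot Require Import Coquelicot.
From Stdlib Require Import Lra.
Open Scope R_scope.


Lemma dot_addl u v w : dot (vadd u v) w = dot u w + dot v w.
Proof. destruct u, v, w; unfold dot, vadd; simpl; ring. Qed.
Lemma dot_addr u v w : dot w (vadd u v) = dot w u + dot w v.
Proof. destruct u, v, w; unfold dot, vadd; simpl; ring. Qed.
Lemma dot_scall a u w : dot (vscal a u) w = a * dot u w.
Proof. destruct u, w; unfold dot, vscal; simpl; ring. Qed.
Lemma dot_scalr a u w : dot w (vscal a u) = a * dot w u.
Proof. destruct u, w; unfold dot, vscal; simpl; ring. Qed.
Lemma dot_comm u v : dot u v = dot v u.
Proof. destruct u, v; unfold dot; simpl; ring. Qed.

Definition fr (a c e : R) (T N B : vec) := vadd (vscal a T) (vadd (vscal c N) (vscal e B)).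

Definition tau3' A L xi0 V1 V2 V3 V5 T0 :=
  vadd V5 (vsub (Rcurv A L xi0 V3 T0 T0) (Rcurv A L xi0 V2 V1 T0)).

Lemma basis (T N B v : vec) :
  dot T T = 1 -> dot N N = 1 -> dot B B = 1 -> dot T N = 0 -> dot T B = 0 -> dot N B = 0 ->
  dot v T = 0 -> dot v N = 0 -> dot v B = 0 -> v = vzero.
Proof.
  destruct T as [t1 t2 t3], N as [n1 n2 n3], B as [b1 b2 b3], v as [v1 v2 v3].
  unfold dot; simpl; intros hTT hNN hBB hTN hTB hNB h1 h2 h3.
  set (D := t1*(n2*b3 - n3*b2) - t2*(n1*b3-n3*b1) + t3*(n1*b2-n2*b1)).
  assert (HD : D*D = 1).
  { assert (E : D*D =
      (t1*t1+t2*t2+t3*t3)*((n1*n1+n2*n2+n3*n3)*(b1*b1+b2*b2+b3*b3) - (n1*b1+n2*b2+n3*b3)^2)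
      - (t1*n1+t2*n2+t3*n3)*((t1*n1+t2*n2+t3*n3)*(b1*b1+b2*b2+b3*b3) - (n1*b1+n2*b2+n3*b3)*(t1*b1+t2*b2+t3*b3))
      + (t1*b1+t2*b2+t3*b3)*((t1*n1+t2*n2+t3*n3)*(n1*b1+n2*b2+n3*b3) - (n1*n1+n2*n2+n3*n3)*(t1*b1+t2*b2+t3*b3)))
      by (unfold D; ring).
    rewrite E, hTT, hNN, hBB, hTN, hTB, hNB; ring. }
  assert (E1 : D * v1 = (v1*t1+v2*t2+v3*t3)*(n2*b3-n3*b2) + (v1*n1+v2*n2+v3*n3)*(b2*t3-b3*t2)
                        + (v1*b1+v2*b2+v3*b3)*(t2*n3-t3*n2)) by (unfold D; ring).
  assert (E2 : D * v2 = (v1*t1+v2*t2+v3*t3)*(n3*b1-n1*b3) + (v1*n1+v2*n2+v3*n3)*(b3*t1-b1*t3)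
                        + (v1*b1+v2*b2+v3*b3)*(t3*n1-t1*n3)) by (unfold D; ring).
  assert (E3 : D * v3 = (v1*t1+v2*t2+v3*t3)*(n1*b2-n2*b1) + (v1*n1+v2*n2+v3*n3)*(b1*t2-b2*t1)
                        + (v1*b1+v2*b2+v3*b3)*(t1*n2-t2*n1)) by (unfold D; ring).
  rewrite h1, h2, h3 in E1, E2, E3.
  assert (v1 = D*(D*v1)) by (rewrite <- Rmult_assoc, HD; ring).
  assert (v2 = D*(D*v2)) by (rewrite <- Rmult_assoc, HD; ring).
  assert (v3 = D*(D*v3)) by (rewrite <- Rmult_assoc, HD; ring).
  unfold vzero; f_equal; nra.
Qed.

Ltac expand :=
  unfold tau3', fr, Rcurv, vsub; cbv zeta;
  repeat rewrite ?dot_addl, ?dot_addr, ?dot_scall, ?dot_scalr.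

Lemma key (T N B xi : vec) (K0 K1 K2 K3 K4 L0 L1 L2 L3 A L : R) :
  dot T T = 1 -> dot N N = 1 -> dot B B = 1 -> dot T N = 0 -> dot T B = 0 -> dot N B = 0 ->
  forall V1, V1 = fr 0 K0 0 T N B ->
  forall V2, V2 = fr (- K0^2) K1 (K0*L0) T N B ->
  forall V3, V3 = fr (-3*K0*K1) (K2 - K0^3 - K0*L0^2) (2*K1*L0 + K0*L1) T N B ->
  let a4 := -3*K1^2 - 4*K0*K2 + K0^4 + K0^2*L0^2 in
  let c4 := K3 - 6*K0^2*K1 - 3*K1*L0^2 - 3*K0*L0*L1 in
  let e4 := 3*L0*K2 + 3*K1*L1 + K0*L2 - K0^3*L0 - K0*L0^3 in
  let da4 := -10*K1*K2 - 4*K0*K3 + 4*K0^3*K1 + 2*K0*K1*L0^2 + 2*K0^2*L0*L1 in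
  let dc4 := K4 - 12*K0*K1^2 - 6*K0^2*K2 - 3*K2*L0^2 - 9*K1*L0*L1 - 3*K0*L1^2 - 3*K0*L0*L2 in
  let de4 := 3*L0*K3 + 6*K2*L1 + 4*K1*L2 + K0*L3 - 3*K0^2*K1*L0 - K0^3*L1 - K1*L0^3 - 3*K0*L0^2*L1 in
  forall V5, V5 = fr (da4 - K0*c4) (a4*K0 + dc4 - L0*e4) (c4*L0 + de4) T N B ->
  let eT := dot T xi in let eN := dot N xi in let eB := dot B xi in
  let tau := tau3' A L xi V1 V2 V3 V5 T in
  dot tau T = -5 * (K0 * K3 + 2 * K1 * K2 - 2 * K0 ^ 3 * K1
       - L0 ^ 2 * K0 * K1 - K0 ^ 2 * L0 * L1) /\
  dot tau N = K4 - 10 * K0 ^ 2 * K2 - 6 * L0 ^ 2 * K2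
       - 4 * K0 * L0 * L2 - 15 * K0 * K1 ^ 2
       - 12 * L0 * L1 * K1 - 3 * K0 * L1 ^ 2
       + K0 ^ 5 + K0 * L0 ^ 4 + 2 * K0 ^ 3 * L0 ^ 2
       + (K2 - 2 * K0 ^ 3 - K0 * L0 ^ 2)
           * (A - L * (eT ^ 2 + eN ^ 2))
       - (K0 ^ 2 * L0 * eT + (2 * L0 * K1 + K0 * L1) * eN)
           * L * eB /\
  dot tau B = 4 * L0 * K3 + 6 * K2 * L1 + 4 * K1 * L2
       - 9 * K0 ^ 2 * L0 * K1 - 4 * L0 ^ 3 * K1
       - 6 * K0 * L0 ^ 2 * L1 - L1 * K0 ^ 3 + K0 * L3
       + (2 * K1 * L0 + K0 * L1)
           * (A - L * (eT ^ 2 + eB ^ 2))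
       + (K0 ^ 2 * L0 * eT - (K2 - 2 * K0 ^ 3 - K0 * L0 ^ 2) * eB)
           * L * eN.
Proof.
  intros hTT hNN hBB hTN hTB hNB V1 h1 V2 h2 V3 h3 a4 c4 e4 da4 dc4 de4 V5 h5 eT eN eB tau.
  unfold tau, eT, eN, eB. subst V1 V2 V3 V5.
  expand.
  rewrite ?(dot_comm N T), ?(dot_comm B T), ?(dot_comm B N), ?(dot_comm xi T),
    ?(dot_comm xi N), ?(dot_comm xi B).
  rewrite ?hTT, ?hNN, ?hBB, ?hTN, ?hTB, ?hNB.
  unfold a4, c4, e4, da4, dc4, de4.
  repeat split; ring.
Qed.

Ltac solve_der :=
  auto_derive;
  [ repeat split; try (eexists; eassumption)
  | repeat match goal with
    | H : is_derive ?f ?x ?l |- context [Derive ?g ?x] =>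
        rewrite (is_derive_unique g x l H) end; ring ].

Lemma step (k1 k2 tx nx bx a c e : R -> R) (da dc de s A2 C2 E2 : R) :
  is_derive tx s (k1 s * nx s) -> is_derive nx s (-k1 s*tx s + k2 s*bx s) ->
  is_derive bx s (-k2 s*nx s) -> is_derive a s da -> is_derive c s dc -> is_derive e s de ->
  A2 = da - k1 s * c s -> C2 = a s * k1 s + dc - k2 s * e s -> E2 = c s * k2 s + de ->
  is_derive (fun t => a t*tx t + c t*nx t + e t*bx t) s (A2*tx s + C2*nx s + E2*bx s).
Proof.
  intros H1 H2 H3 H4 H5 H6 -> -> ->. solve_der.
Qed.

Lemma lift (P : R -> Prop) (openP : forall s, P s -> locally s P) (tx F G : R -> R) n :
  (forall t, P t -> Derive_n tx n t = F t) -> (forall t, P t -> is_derive F t (G t)) ->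
  forall t, P t -> Derive_n tx (S n) t = G t.
Proof.
  intros HF HG t Pt. simpl.
  rewrite (Derive_ext_loc _ F).
  - apply is_derive_unique, HG, Pt.
  - generalize (openP t Pt). apply filter_imp. intros x Px; apply HF, Px.
Qed.

Lemma jet (P : R -> Prop) (k : R -> R) (Hk : forall s, P s -> forall n, ex_derive_n k n s) j t :
  P t -> is_derive (Derive_n k j) t (Derive_n k (S j) t).
Proof. intros Pt. apply Derive_correct. apply (Hk t Pt (S j)). Qed.

Definition Kn (f : R -> R) (j : nat) (t : R) := Derive_n f j t.

Section Chain.
Variables (P : R -> Prop) (openP : forall s, P s -> locally s P) (k1 k2 tx nx bx : R -> R).
Hypothesis (Hk1 : forall s, P s -> forall n, ex_derive_n k1 n s).
Hypothesis (Hk2 : forall s, P s -> forall n, ex_derive_n k2 n s).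
Hypothesis (HT : forall s, P s -> is_derive tx s (k1 s * nx s)).
Hypothesis (HN : forall s, P s -> is_derive nx s (-k1 s*tx s + k2 s*bx s)).
Hypothesis (HB : forall s, P s -> is_derive bx s (-k2 s*nx s)).

Definition Fr (a c e : R -> R) := fun t => a t * tx t + c t * nx t + e t * bx t.

Lemma jetK k (Hk : forall s, P s -> forall n, ex_derive_n k n s) j t :
  P t -> is_derive (Kn k j) t (Kn k (S j) t).
Proof. apply jet; auto. Qed.

Lemma K0e t : Kn k1 0 t = k1 t. Proof. reflexivity. Qed.
Lemma L0e t : Kn k2 0 t = k2 t. Proof. reflexivity. Qed.

Ltac jets t Pt :=
  pose proof (jetK k1 Hk1 0 t Pt); pose proof (jetK k1 Hk1 1 t Pt);
  pose proof (jetK k1 Hk1 2 t Pt); pose proof (jetK k1 Hk1 3 t Pt);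
  pose proof (jetK k2 Hk2 0 t Pt); pose proof (jetK k2 Hk2 1 t Pt);
  pose proof (jetK k2 Hk2 2 t Pt).



Ltac cd :=
  set (F0 := Kn k1 0) in *; set (F1 := Kn k1 1) in *; set (F2 := Kn k1 2) in *;
  set (F3 := Kn k1 3) in *; set (F4 := Kn k1 4) in *;
  set (G0 := Kn k2 0) in *; set (G1 := Kn k2 1) in *; set (G2 := Kn k2 2) in *;
  set (G3 := Kn k2 3) in *;
  clearbody F0 F1 F2 F3 F4 G0 G1 G2 G3; solve_der.

Ltac do_step a c e da dc de :=
  intros t Pt; jets t Pt; unfold Fr;
  apply (step k1 k2 tx nx bx a c e (da t) (dc t) (de t));
  [ apply HT, Pt | apply HN, Pt | apply HB, Pt | cd | cd | cd
  | unfold Kn; simpl; ring | unfold Kn; simpl; ring | unfold Kn; simpl; ring ].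

Lemma D1 : forall t, P t -> Derive_n tx 1 t = Fr (fun _ => 0) (Kn k1 0) (fun _ => 0) t.
Proof.
  intros t Pt. change (Derive tx t = Fr (fun _ => 0) (Kn k1 0) (fun _ => 0) t).
  rewrite (is_derive_unique _ _ _ (HT t Pt)). unfold Fr, Kn; simpl; ring.
Qed.

Lemma D2 : forall t, P t -> Derive_n tx 2 t =
  Fr (fun t => - Kn k1 0 t ^ 2) (Kn k1 1) (fun t => Kn k1 0 t * Kn k2 0 t) t.
Proof.
  apply (lift P openP tx _ _ 1 D1).
  do_step (fun _ : R => 0) (Kn k1 0) (fun _ : R => 0) (fun _ : R => 0) (Kn k1 1) (fun _ : R => 0).
Qed.
Lemma D3 : forall t, P t -> Derive_n tx 3 t = Fr (fun t : R => -3*Kn k1 0 t*Kn k1 1 t) (fun t : R => Kn k1 2 t - Kn k1 0 t^3 - Kn k1 0 t*Kn k2 0 t^2) (fun t : R => 2*Kn k1 1 t*Kn k2 0 t + Kn k1 0 t*Kn k2 1 t) t.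
Proof.
  apply (lift P openP tx _ _ 2 D2).
  do_step (fun t : R => - Kn k1 0 t^2) (fun t : R => Kn k1 1 t) (fun t : R => Kn k1 0 t*Kn k2 0 t) (fun t : R => -2*Kn k1 0 t*Kn k1 1 t) (fun t : R => Kn k1 2 t) (fun t : R => Kn k1 1 t*Kn k2 0 t+Kn k1 0 t*Kn k2 1 t).
Qed.

Lemma D4 : forall t, P t -> Derive_n tx 4 t = Fr (fun t : R => -3*Kn k1 1 t^2 - 4*Kn k1 0 t*Kn k1 2 t + Kn k1 0 t^4 + Kn k1 0 t^2*Kn k2 0 t^2) (fun t : R => Kn k1 3 t - 6*Kn k1 0 t^2*Kn k1 1 t - 3*Kn k1 1 t*Kn k2 0 t^2 - 3*Kn k1 0 t*Kn k2 0 t*Kn k2 1 t) (fun t : R => 3*Kn k2 0 t*Kn k1 2 t + 3*Kn k1 1 t*Kn k2 1 t + Kn k1 0 t*Kn k2 2 t - Kn k1 0 t^3*Kn k2 0 t - Kn k1 0 t*Kn k2 0 t^3) t.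
Proof.
  apply (lift P openP tx _ _ 3 D3).
  do_step (fun t : R => -3*Kn k1 0 t*Kn k1 1 t) (fun t : R => Kn k1 2 t - Kn k1 0 t^3 - Kn k1 0 t*Kn k2 0 t^2) (fun t : R => 2*Kn k1 1 t*Kn k2 0 t + Kn k1 0 t*Kn k2 1 t) (fun t : R => -3*Kn k1 1 t^2-3*Kn k1 0 t*Kn k1 2 t) (fun t : R => Kn k1 3 t-3*Kn k1 0 t^2*Kn k1 1 t-Kn k1 1 t*Kn k2 0 t^2-2*Kn k1 0 t*Kn k2 0 t*Kn k2 1 t) (fun t : R => 2*Kn k1 2 t*Kn k2 0 t+3*Kn k1 1 t*Kn k2 1 t+Kn k1 0 t*Kn k2 2 t).
Qed.

Lemma D5 : forall t, P t -> Derive_n tx 5 t = Fr (fun t : R => (-10*Kn k1 1 t*Kn k1 2 t - 4*Kn k1 0 t*Kn k1 3 t + 4*Kn k1 0 t^3*Kn k1 1 t + 2*Kn k1 0 t*Kn k1 1 t*Kn k2 0 t^2 + 2*Kn k1 0 t^2*Kn k2 0 t*Kn k2 1 t) - Kn k1 0 t*(Kn k1 3 t - 6*Kn k1 0 t^2*Kn k1 1 t - 3*Kn k1 1 t*Kn k2 0 t^2 - 3*Kn k1 0 t*Kn k2 0 t*Kn k2 1 t)) (fun t : R => (-3*Kn k1 1 t^2 - 4*Kn k1 0 t*Kn k1 2 t + Kn k1 0 t^4 + Kn k1 0 t^2*Kn k2 0 t^2)*Kn k1 0 t + (Kn k1 4 t - 12*Kn k1 0 t*Kn k1 1 t^2 -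 6*Kn k1 0 t^2*Kn k1 2 t - 3*Kn k1 2 t*Kn k2 0 t^2 - 9*Kn k1 1 t*Kn k2 0 t*Kn k2 1 t - 3*Kn k1 0 t*Kn k2 1 t^2 - 3*Kn k1 0 t*Kn k2 0 t*Kn k2 2 t) - Kn k2 0 t*(3*Kn k2 0 t*Kn k1 2 t + 3*Kn k1 1 t*Kn k2 1 t + Kn k1 0 t*Kn k2 2 t - Kn k1 0 t^3*Kn k2 0 t - Kn k1 0 t*Kn k2 0 t^3)) (fun t : R => (Kn k1 3 t - 6*Kn k1 0 t^2*Kn k1 1 t - 3*Kn k1 1 t*Kn k2 0 t^2 - 3*Kn k1 0 t*Kn k2 0 t*Kn k2 1 t)*Kn k2 0 t + (3*Kn k2 0 t*Kn k1 3 t + 6*Kn k1 2 t*Kn k2 1 t + 4*Kn k1 1 t*Kn k2 2 t + Kn k1 0 t*Kn k2 3 t - 3*Kn k1 0 t^2*Kn k1 1 t*Kn k2 0 t - Kn k1 0 t^3*Kn k2 1 t - Kn k1 1 t*Kn k2 0 t^3 - 3*Kn k1 0 t*Kn k2 0 t^2*Kn k2 1 t)) t.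
Proof.
  apply (lift P openP tx _ _ 4 D4).
  do_step (fun t : R => -3*Kn k1 1 t^2 - 4*Kn k1 0 t*Kn k1 2 t + Kn k1 0 t^4 + Kn k1 0 t^2*Kn k2 0 t^2) (fun t : R => Kn k1 3 t - 6*Kn k1 0 t^2*Kn k1 1 t - 3*Kn k1 1 t*Kn k2 0 t^2 - 3*Kn k1 0 t*Kn k2 0 t*Kn k2 1 t) (fun t : R => 3*Kn k2 0 t*Kn k1 2 t + 3*Kn k1 1 t*Kn k2 1 t + Kn k1 0 t*Kn k2 2 t - Kn k1 0 t^3*Kn k2 0 t - Kn k1 0 t*Kn k2 0 t^3) (fun t : R => -10*Kn k1 1 t*Kn k1 2 t - 4*Kn k1 0 t*Kn k1 3 t + 4*Kn k1 0 t^3*Kn k1 1 t + 2*Kn k1 0 t*Kn k1 1 t*Kn k2 0 t^2 + 2*Kn k1 0 t^2*Kn k2 0 t*Kn k2 1 t) (fun t : R => Kn k1 4 t - 12*Kn k1 0 t*Kn k1 1 t^2 - 6*Kn k1 0 t^2*Kn k1 2 t - 3*Kn k1 2 t*Kn k2 0 t^2 - 9*Kn k1 1 t*Kn k2 0 t*Kn k2 1 t - 3*Kn k1 0 t*Kn k2 1 t^2 - 3*Kn k1 0 t*Kn k2 0 t*Kn k2 2 t) (fun t : R => 3*Kn k2 0 t*Kn k1 3 t + 6*Kn k1 2 t*Kn k2 1 t + 4*Kn k1 1 t*Kn k2 2 t + Kn k1 0 t*Kn k2 3 t - 3*Kn k1 0 t^2*Kn k1 1 t*Kn k2 0 t - Kn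 k1 0 t^3*Kn k2 1 t - Kn k1 1 t*Kn k2 0 t^3 - 3*Kn k1 0 t*Kn k2 0 t^2*Kn k2 1 t).
Qed.

End Chain.

Theorem theorem1
  (a b : Rbar)
  (r f fp : R -> R)            (* scalar curvature, f, f' along gamma, as functions of s *)
  (xi : R -> vec)              (* the Reeb field xi along gamma *)
  (T N B : R -> vec)           (* Frenet frame along gamma, T = gamma' *)
  (k1 k2 : R -> R)             (* curvature and torsion *)
  (Hab : Rbar_lt a b)
  (Hxi : forall s, inI a b s -> dot (xi s) (xi s) = 1)
  (Hk1 : forall s, inI a b s -> forall n, ex_derive_n k1 n s)
  (Hk2 : forall s, inI a b s -> forall n, ex_derive_n k2 n s)
  (Hng : forall s, inI a b s -> 0 < k1 s)
  (HTT : forall s, inI a b s -> dot (T s) (T s) = 1)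
  (HNN : forall s, inI a b s -> dot (N s) (N s) = 1)
  (HBB : forall s, inI a b s -> dot (B s) (B s) = 1)
  (HTN : forall s, inI a b s -> dot (T s) (N s) = 0)
  (HTB : forall s, inI a b s -> dot (T s) (B s) = 0)
  (HNB : forall s, inI a b s -> dot (N s) (B s) = 0)
  (HfT : forall s, inI a b s -> vis_derive T s (vscal (k1 s) (N s)))
  (HfN : forall s, inI a b s ->
           vis_derive N s (vadd (vscal (- k1 s) (T s)) (vscal (k2 s) (B s))))
  (HfB : forall s, inI a b s -> vis_derive B s (vscal (- k2 s) (N s))) :
  let A := fun s => Acoef (r s) (f s) (fp s) in
  let L := fun s => Lcoef (r s) (f s) (fp s) in
  let eT := fun s => dot (T s) (xi s) in
  let eN := fun s => dot (N s) (xi s) in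
  let eB := fun s => dot (B s) (xi s) in
  (forall s, inI a b s -> tau3 (A s) (L s) (xi s) T s = vzero)
  <->
  (forall s, inI a b s ->
     Derive_n k1 0 s * Derive_n k1 3 s + 2 * Derive_n k1 1 s * Derive_n k1 2 s - 2 * Derive_n k1 0 s ^ 3 * Derive_n k1 1 s
       - Derive_n k2 0 s ^ 2 * Derive_n k1 0 s * Derive_n k1 1 s - Derive_n k1 0 s ^ 2 * Derive_n k2 0 s * Derive_n k2 1 s = 0
     /\
     Derive_n k1 4 s - 10 * Derive_n k1 0 s ^ 2 * Derive_n k1 2 s - 6 * Derive_n k2 0 s ^ 2 * Derive_n k1 2 s
       - 4 * Derive_n k1 0 s * Derive_n k2 0 s * Derive_n k2 2 s - 15 * Derive_n k1 0 s * Derive_n k1 1 s ^ 2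
       - 12 * Derive_n k2 0 s * Derive_n k2 1 s * Derive_n k1 1 s - 3 * Derive_n k1 0 s * Derive_n k2 1 s ^ 2
       + Derive_n k1 0 s ^ 5 + Derive_n k1 0 s * Derive_n k2 0 s ^ 4 + 2 * Derive_n k1 0 s ^ 3 * Derive_n k2 0 s ^ 2
       + (Derive_n k1 2 s - 2 * Derive_n k1 0 s ^ 3 - Derive_n k1 0 s * Derive_n k2 0 s ^ 2)
           * (A s - L s * (eT s ^ 2 + eN s ^ 2))
       - (Derive_n k1 0 s ^ 2 * Derive_n k2 0 s * eT s + (2 * Derive_n k2 0 s * Derive_n k1 1 s + Derive_n k1 0 s * Derive_n k2 1 s) * eN s)
           * L s * eB s = 0
     /\
     4 * Derive_n k2 0 s * Derive_n k1 3 s + 6 * Derive_n k1 2 s * Derive_n k2 1 s + 4 * Derive_n k1 1 s * Derive_n k2 2 s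
       - 9 * Derive_n k1 0 s ^ 2 * Derive_n k2 0 s * Derive_n k1 1 s - 4 * Derive_n k2 0 s ^ 3 * Derive_n k1 1 s
       - 6 * Derive_n k1 0 s * Derive_n k2 0 s ^ 2 * Derive_n k2 1 s - Derive_n k2 1 s * Derive_n k1 0 s ^ 3 + Derive_n k1 0 s * Derive_n k2 3 s
       + (2 * Derive_n k1 1 s * Derive_n k2 0 s + Derive_n k1 0 s * Derive_n k2 1 s)
           * (A s - L s * (eT s ^ 2 + eB s ^ 2))
       + (Derive_n k1 0 s ^ 2 * Derive_n k2 0 s * eT s - (Derive_n k1 2 s - 2 * Derive_n k1 0 s ^ 3 - Derive_n k1 0 s * Derive_n k2 0 s ^ 2) * eB s)
           * L s * eN s = 0).
Proof.
  intros A L eT eN eB.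
  assert (openP : forall s, inI a b s -> locally s (inI a b)).
  { intros s Hs. exact (open_and _ _ (open_Rbar_gt a) (open_Rbar_lt b) s Hs). }
  set (P := inI a b) in *.
  assert (HTx : forall s, P s -> is_derive (fun t => vx (T t)) s (k1 s * vx (N s))) by (intros s Hs; exact (proj1 (HfT s Hs))).
  assert (HTy : forall s, P s -> is_derive (fun t => vy (T t)) s (k1 s * vy (N s))) by (intros s Hs; exact (proj1 (proj2 (HfT s Hs)))).
  assert (HTz : forall s, P s -> is_derive (fun t => vz (T t)) s (k1 s * vz (N s))) by (intros s Hs; exact (proj2 (proj2 (HfT s Hs)))).
  assert (HNx : forall s, P s -> is_derive (fun t => vx (N t)) s (- k1 s * vx (T s) + k2 s * vx (B s))) by (intros s Hs; exact (proj1 (HfN s Hs))).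
  assert (HNy : forall s, P s -> is_derive (fun t => vy (N t)) s (- k1 s * vy (T s) + k2 s * vy (B s))) by (intros s Hs; exact (proj1 (proj2 (HfN s Hs)))).
  assert (HNz : forall s, P s -> is_derive (fun t => vz (N t)) s (- k1 s * vz (T s) + k2 s * vz (B s))) by (intros s Hs; exact (proj2 (proj2 (HfN s Hs)))).
  assert (HBx : forall s, P s -> is_derive (fun t => vx (B t)) s (- k2 s * vx (N s))) by (intros s Hs; exact (proj1 (HfB s Hs))).
  assert (HBy : forall s, P s -> is_derive (fun t => vy (B t)) s (- k2 s * vy (N s))) by (intros s Hs; exact (proj1 (proj2 (HfB s Hs)))).
  assert (HBz : forall s, P s -> is_derive (fun t => vz (B t)) s (- k2 s * vz (N s))) by (intros s Hs; exact (proj2 (proj2 (HfB s Hs)))).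
  assert (KEY : forall s, P s ->
    let K0 := Derive_n k1 0 s in let K1 := Derive_n k1 1 s in let K2 := Derive_n k1 2 s in
    let K3 := Derive_n k1 3 s in let K4 := Derive_n k1 4 s in
    let L0 := Derive_n k2 0 s in let L1 := Derive_n k2 1 s in let L2 := Derive_n k2 2 s in
    let L3 := Derive_n k2 3 s in
    let tau := tau3 (A s) (L s) (xi s) T s in
    dot tau (T s) = -5 * (K0 * K3 + 2 * K1 * K2 - 2 * K0 ^ 3 * K1
       - L0 ^ 2 * K0 * K1 - K0 ^ 2 * L0 * L1) /\
    dot tau (N s) = K4 - 10 * K0 ^ 2 * K2 - 6 * L0 ^ 2 * K2
       - 4 * K0 * L0 * L2 - 15 * K0 * K1 ^ 2
       - 12 * L0 * L1 * K1 - 3 * K0 * L1 ^ 2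
       + K0 ^ 5 + K0 * L0 ^ 4 + 2 * K0 ^ 3 * L0 ^ 2
       + (K2 - 2 * K0 ^ 3 - K0 * L0 ^ 2)
           * (A s - L s * (eT s ^ 2 + eN s ^ 2))
       - (K0 ^ 2 * L0 * eT s + (2 * L0 * K1 + K0 * L1) * eN s)
           * L s * eB s /\
    dot tau (B s) = 4 * L0 * K3 + 6 * K2 * L1 + 4 * K1 * L2
       - 9 * K0 ^ 2 * L0 * K1 - 4 * L0 ^ 3 * K1
       - 6 * K0 * L0 ^ 2 * L1 - L1 * K0 ^ 3 + K0 * L3
       + (2 * K1 * L0 + K0 * L1)
           * (A s - L s * (eT s ^ 2 + eB s ^ 2))
       + (K0 ^ 2 * L0 * eT s - (K2 - 2 * K0 ^ 3 - K0 * L0 ^ 2) * eB s)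
           * L s * eN s).
  { intros s Hs.
    change (tau3 (A s) (L s) (xi s) T s) with
      (tau3' (A s) (L s) (xi s) (Dn 1 T s) (Dn 2 T s) (Dn 3 T s) (Dn 5 T s) (T s)).
    apply key; auto;
    unfold Dn, fr, vadd, vscal; cbn [vx vy vz]; f_equal;
    (first [ (etransitivity; [ apply (D1 P k1 (fun t => vx (T t)) (fun t => vx (N t)) (fun t => vx (B t)) HTx s Hs) | ])
      | (etransitivity; [ apply (D2 P openP k1 k2 (fun t => vx (T t)) (fun t => vx (N t)) (fun t => vx (B t)) Hk1 Hk2 HTx HNx HBx s Hs) | ])
      | (etransitivity; [ apply (D3 P openP k1 k2 (fun t => vx (T t)) (fun t => vx (N t)) (fun t => vx (B t)) Hk1 Hk2 HTx HNx HBx s Hs) | ])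
      | (etransitivity; [ apply (D5 P openP k1 k2 (fun t => vx (T t)) (fun t => vx (N t)) (fun t => vx (B t)) Hk1 Hk2 HTx HNx HBx s Hs) | ])
      | (etransitivity; [ apply (D1 P k1 (fun t => vy (T t)) (fun t => vy (N t)) (fun t => vy (B t)) HTy s Hs) | ])
      | (etransitivity; [ apply (D2 P openP k1 k2 (fun t => vy (T t)) (fun t => vy (N t)) (fun t => vy (B t)) Hk1 Hk2 HTy HNy HBy s Hs) | ])
      | (etransitivity; [ apply (D3 P openP k1 k2 (fun t => vy (T t)) (fun t => vy (N t)) (fun t => vy (B t)) Hk1 Hk2 HTy HNy HBy s Hs) | ])
      | (etransitivity; [ apply (D5 P openP k1 k2 (fun t => vy (T t)) (fun t => vy (N t)) (fun t => vy (B t)) Hk1 Hk2 HTy HNy HBy s Hs) | ])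
      | (etransitivity; [ apply (D1 P k1 (fun t => vz (T t)) (fun t => vz (N t)) (fun t => vz (B t)) HTz s Hs) | ])
      | (etransitivity; [ apply (D2 P openP k1 k2 (fun t => vz (T t)) (fun t => vz (N t)) (fun t => vz (B t)) Hk1 Hk2 HTz HNz HBz s Hs) | ])
      | (etransitivity; [ apply (D3 P openP k1 k2 (fun t => vz (T t)) (fun t => vz (N t)) (fun t => vz (B t)) Hk1 Hk2 HTz HNz HBz s Hs) | ])
      | (etransitivity; [ apply (D5 P openP k1 k2 (fun t => vz (T t)) (fun t => vz (N t)) (fun t => vz (B t)) Hk1 Hk2 HTz HNz HBz s Hs) | ]) ]);
    unfold Fr, Kn; ring. }
  split.
  - intros H s Hs. destruct (KEY s Hs) as [E1 [E2 E3]].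
    rewrite (H s Hs) in E1, E2, E3.
    unfold dot, vzero in E1, E2, E3; cbn [vx vy vz] in E1, E2, E3.
    split; [|split]; lra.
  - intros H s Hs. destruct (KEY s Hs) as [E1 [E2 E3]]. destruct (H s Hs) as [F1 [F2 F3]].
    apply (basis (T s) (N s) (B s)); auto.
    + rewrite E1, F1. ring.
    + rewrite E2. exact F2.
    + rewrite E3. exact F3.
Qed.
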